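(* Let $(H_X,H_Z)$ be a CSS code on $n$ qubits with $k$ logical qubits and $Z$-distance $d_Z$. Define the CSS code on $2n$ qubits with $X$-stabilizer matrix $H'_X=\begin{pmatrix}H_X&H_X\\0&H_Z\end{pmatrix}$ and $Z$-stabilizer matrix $H'_Z=\begin{pmatrix}H_Z&0\\H_X&H_X\end{pmatrix}$. Then $H'_X{H'_Z}^T=0$, the code encodes $2k$ logical qubits, and its $X$- and $Z$-distances are both equal to $$d'=\min\Big[d_Z,\ \min_{l\in\ker H_Z\setminus\mathrm{rs}(H_X),\ g\in\ker H_X}\big(2|l|+|g|-2|l\wedge g|\big)\Big].$$
   Context: Arithmetic over $\mathbb F_2$; $|v|$ is Hamming weight; $l\wedge g$ is the coordinatewise product; $\mathrm{rs}$ is row space and $\ker M=\{v:Mv^T=0\}$. For a CSS code $(H_X,H_Z)$: $k=n-\operatorname{rank}H_X-\operatorname{rank}H_Z$, $d_X=\min\{|v|:v\in\ker H_Z\setminus\mathrm{rs}(H_X)\}$, $d_Z=\min\{|v|:v\in\ker H_X\setminus\mathrm{rs}(H_Z)\}$. The new code corresponds to placing the code and its Hadamard-dual side by side and applying transversal CNOTs from the first to the second block. *)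

(* Defs.v *)
From mathcomp Require Import all_boot all_order all_algebra.
Set Implicit Arguments. Unset Strict Implicit. Unset Printing Implicit Defensive.
Import GRing.Theory.
Local Open Scope ring_scope.

Notation F2 := 'F_2.

Definition wt n (v : 'rV[F2]_n) : nat := #|[set j : 'I_n | v 0 j != 0]|.

Definition vand n (l g : 'rV[F2]_n) : 'rV[F2]_n := \row_j (l 0 j * g 0 j).

Definition inker m n (M : 'M[F2]_(m, n)) (v : 'rV[F2]_n) : bool :=
  M *m v^T == 0.

Definition inrs m n (M : 'M[F2]_(m, n)) (v : 'rV[F2]_n) : bool :=
  (v <= M)%MS.

(* Minimum of f over the (finite) set {x | P x}; the value [top] is returned
   only if the set is empty (it is always chosen >= every f x). *)
Definition minover (T : finType) (P : pred T) (f : T -> nat) (top : nat) : nat :=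
  \big[minn/top]_(x | P x) f x.

Definition css_k mx mz n (HX : 'M[F2]_(mx, n)) (HZ : 'M[F2]_(mz, n)) : nat :=
  (n - \rank HX - \rank HZ)%N.

Definition css_dX mx mz n (HX : 'M[F2]_(mx, n)) (HZ : 'M[F2]_(mz, n)) : nat :=
  minover (fun v : 'rV[F2]_n => inker HZ v && ~~ inrs HX v) (@wt n) n.

Definition css_dZ mx mz n (HX : 'M[F2]_(mx, n)) (HZ : 'M[F2]_(mz, n)) : nat :=
  minover (fun v : 'rV[F2]_n => inker HX v && ~~ inrs HZ v) (@wt n) n.

Definition newHX mx mz n (HX : 'M[F2]_(mx, n)) (HZ : 'M[F2]_(mz, n))
  : 'M[F2]_(mx + mz, n + n) := block_mx HX HX 0 HZ.
Definition newHZ mx mz n (HX : 'M[F2]_(mx, n)) (HZ : 'M[F2]_(mz, n))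
  : 'M[F2]_(mz + mx, n + n) := block_mx HZ 0 HX HX.

Definition dprime mx mz n (HX : 'M[F2]_(mx, n)) (HZ : 'M[F2]_(mz, n)) : nat :=
  minn (css_dZ HX HZ)
    (minover (fun l : 'rV[F2]_n => inker HZ l && ~~ inrs HX l)
       (fun l => minover (fun g : 'rV[F2]_n => inker HX g)
                   (fun g => 2 * wt l + wt g - 2 * wt (vand l g))%N (2 * n)%N)
       (2 * n)%N).

(* Main.v *)
Require Import Defs.
From mathcomp Require Import all_boot all_order all_algebra.
From mathcomp Require Import zify.
Local Open Scope ring_scope.
Import GRing.Theory.
Set Implicit Arguments. Unset Strict Implicit.

Lemma F2_addxx (x : 'F_2) : x + x = 0.
Proof. by case: x => [[|[|i]]] //= Hi; apply/val_inj. Qed.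
Lemma F2_ne (x y: 'F_2) : (x + y != 0) = (x != 0) (+) (y != 0).
Proof. by case: x => [[|[|i]]] //= Hi; case: y => [[|[|j]]] //= Hj. Qed.
Lemma F2_mne (x y: 'F_2) : (x * y != 0) = (x != 0) && (y != 0).
Proof. by case: x => [[|[|i]]] //= Hi; case: y => [[|[|j]]] //= Hj. Qed.
Lemma F2_opp (x : 'F_2) : - x = x.
Proof. by rewrite -[RHS]subr0 -(F2_addxx x) opprD addNKr. Qed.

Lemma mx_addxx m n (A : 'M['F_2]_(m, n)) : A + A = 0.
Proof. by apply/matrixP=> i j; rewrite !mxE F2_addxx. Qed.
Lemma mx_opp m n (A : 'M['F_2]_(m, n)) : - A = A.
Proof. by apply/matrixP=> i j; rewrite !mxE F2_opp. Qed.

Lemma orth mx mz n (HX : 'M['F_2]_(mx, n)) (HZ : 'M['F_2]_(mz, n)) :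
  HX *m HZ^T = 0 -> newHX HX HZ *m (newHZ HX HZ)^T = 0.
Proof.
move=> H; rewrite /newHX /newHZ tr_block_mx mulmx_block !trmx0 !mulmx0 !mul0mx.
rewrite !addr0 !add0r H mx_addxx. idtac.
have -> : HZ *m HX^T = 0 by rewrite -[HZ]trmxK -trmx_mul H trmx0.
by rewrite block_mx0.
Qed.

Lemma rankX mx mz n (HX : 'M['F_2]_(mx, n)) (HZ : 'M['F_2]_(mz, n)) :
  \rank (newHX HX HZ) = (\rank HX + \rank HZ)%N.
Proof.
have -> : newHX HX HZ = block_mx HX 0 0 HZ *m block_mx 1%:M 1%:M 0 1%:M.
  by rewrite /newHX mulmx_block !mulmx0 !mul0mx !mulmx1 !addr0 !add0r.
rewrite mxrankMfree ?rank_diag_block_mx // row_free_unit unitmxE det_ublock.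
by rewrite det1 mulr1 unitr1.
Qed.

Lemma rankZ mx mz n (HX : 'M['F_2]_(mx, n)) (HZ : 'M['F_2]_(mz, n)) :
  \rank (newHZ HX HZ) = (\rank HZ + \rank HX)%N.
Proof.
have -> : newHZ HX HZ = block_mx HZ 0 0 HX *m block_mx 1%:M 0 1%:M 1%:M.
  by rewrite /newHZ mulmx_block !mulmx0 !mul0mx !mulmx1 !addr0 !add0r.
rewrite mxrankMfree ?rank_diag_block_mx // row_free_unit unitmxE det_lblock.
by rewrite det1 mulr1 unitr1.
Qed.
Lemma minover_top (T : finType) (P : pred T) f top : (minover P f top <= top)%N.
Proof. by rewrite /minover; elim/big_rec: _ => // i x _ Hx; rewrite geq_min Hx orbT. Qed.
Lemma minover_le (T : finType) (P : pred T) f top x : P x -> (minover P f top <= f x)%N.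
Proof.
move=> Px; rewrite /minover; have : x \in index_enum T by rewrite mem_index_enum.
elim: (index_enum T) => // i r IH; rewrite big_cons inE.
case/orP=> [/eqP <-|/IH H]; first by rewrite Px geq_minl.
by case: (P i) => //; rewrite geq_min H orbT.
Qed.
Lemma minover_ge (T : finType) (P : pred T) f top m :
  (forall x, P x -> m <= f x)%N -> (m <= top)%N -> (m <= minover P f top)%N.
Proof.
move=> H Ht; rewrite /minover; elim/big_ind: _ => //.
  by move=> x y Hx Hy; rewrite leq_min Hx.
Qed.
Lemma minover_ex (T : finType) (P : pred T) f top x0 : P x0 ->
  (forall x, P x -> f x <= top)%N -> exists x, P x /\ minover P f top = f x.
Proof.
move=> P0 Ht; case: (arg_minnP f P0) => x Px Hm; exists x; split => //.
apply/eqP; rewrite eqn_leq minover_le //=.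
by apply: minover_ge; [exact: Hm | exact: Ht].
Qed.

Definition supp {n} (v : 'rV['F_2]_n) := [set j : 'I_n | v 0 j != 0].

Lemma wt_add n (a g : 'rV['F_2]_n) : (wt (a + g)%R + 2 * wt (vand a g) = wt a + wt g)%N.
Proof.
rewrite /wt.
have -> : [set j | (a + g)%R 0 j != 0] = ((supp a :|: supp g) :\: (supp a :&: supp g))%SET.
  by apply/setP=> j; rewrite !inE mxE F2_ne; case: (a 0 j != 0); case: (g 0 j != 0).
have -> : [set j | vand a g 0 j != 0] = supp a :&: supp g.
  by apply/setP=> j; rewrite !inE mxE F2_mne.
rewrite -/(supp a) -/(supp g) -cardsUI cardsD.
have -> : (supp a :|: supp g) :&: (supp a :&: supp g) = supp a :&: supp g.
  by apply/setIidPr; apply: subset_trans (subsetIl _ _) (subsetUl _ _).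
have : (#|supp a :&: supp g| <= #|supp a :|: supp g|)%N.
  by apply: subset_leq_card; apply: subset_trans (subsetIl _ _) (subsetUl _ _).
lia.
Qed.

Lemma wt_le n (v : 'rV['F_2]_n) : (wt v <= n)%N.
Proof. by rewrite /wt; apply: leq_trans (max_card _) _; rewrite card_ord. Qed.

Lemma wt_row n (a b : 'rV['F_2]_n) : wt (row_mx a b) = (wt a + wt b)%N.
Proof.
rewrite /wt -!sum1_card big_split_ord /=.
congr (_ + _)%N; apply: eq_bigl => j; rewrite !inE ?row_mxEl ?row_mxEr //.
Qed.

Section Rows.
Variables (mx mz n : nat) (HX : 'M['F_2]_(mx, n)) (HZ : 'M['F_2]_(mz, n)).

Lemma kerZ_row (a b : 'rV['F_2]_n) :
  inker (newHZ HX HZ) (row_mx a b) = inker HZ a && inker HX (a + b).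
Proof.
by rewrite /inker /newHZ tr_row_mx mul_block_col col_mx_eq0 mul0mx addr0 raddfD mulmxDr.
Qed.

Lemma kerX_row (a b : 'rV['F_2]_n) :
  inker (newHX HX HZ) (row_mx a b) = inker HX (a + b) && inker HZ b.
Proof.
by rewrite /inker /newHX tr_row_mx mul_block_col col_mx_eq0 mul0mx add0r raddfD mulmxDr.
Qed.

Lemma rsX_row (a b : 'rV['F_2]_n) :
  inrs (newHX HX HZ) (row_mx a b) = inrs HX a && inrs HZ (a + b).
Proof.
rewrite /inrs; apply/idP/andP.
  case/submxP => x; rewrite -[x]hsubmxK /newHX mul_row_block mulmx0 addr0.
  case/eq_row_mx => -> ->; split; first exact: submxMl.
  by rewrite addrA mx_addxx add0r submxMl.
case=> /submxP [x1 ->] /submxP [x2 Hb]; apply/submxP; exists (row_mx x1 x2).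
by rewrite /newHX mul_row_block mulmx0 addr0 -Hb addrA mx_addxx add0r.
Qed.

Lemma rsZ_row (a b : 'rV['F_2]_n) :
  inrs (newHZ HX HZ) (row_mx a b) = inrs HX b && inrs HZ (a + b).
Proof.
rewrite /inrs; apply/idP/andP.
  case/submxP => x; rewrite -[x]hsubmxK /newHZ mul_row_block mulmx0 add0r.
  case/eq_row_mx => -> ->; split; first exact: submxMl.
  by rewrite -addrA mx_addxx addr0 submxMl.
case=> /submxP [x1 Hb] /submxP [x2 Hab]; apply/submxP; exists (row_mx x2 x1).
rewrite /newHZ mul_row_block mulmx0 add0r -Hb -Hab -addrA mx_addxx addr0.
by [].
Qed.
End Rows.

Lemma exists_logical m1 m2 n (A : 'M['F_2]_(m1, n)) (B : 'M['F_2]_(m2, n)) :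
  (0 < n - \rank A - \rank B)%N -> exists v, inker A v && ~~ inrs B v.
Proof.
move=> Hk; have : ~~ (kermx A^T <= B)%MS.
  by apply/negP=> /mxrankS; rewrite mxrank_ker mxrank_tr; lia.
case/row_subPn => i Hi; exists (row i (kermx A^T)); rewrite /inrs Hi andbT /inker.
have /sub_kermxP H := row_sub i (kermx A^T).
have -> : A *m (row i (kermx A^T))^T = (row i (kermx A^T) *m A^T)^T.
  by rewrite trmx_mul trmxK.
by rewrite H trmx0.
Qed.

Lemma wt0 n : wt (0 : 'rV['F_2]_n) = 0%N.
Proof. by rewrite /wt; apply/eqP; rewrite cards_eq0; apply/eqP/setP => j; rewrite !inE mxE eqxx. Qed.

Lemma inker0 m n (A : 'M['F_2]_(m, n)) : inker A 0.
Proof. by rewrite /inker trmx0 mulmx0. Qed.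

Lemma f_eq n (l g : 'rV['F_2]_n) :
  (2 * wt l + wt g - 2 * wt (vand l g) = wt l + wt (l + g)%R)%N.
Proof. have := wt_add l g; lia. Qed.

Lemma addKF2 n (a g : 'rV['F_2]_n) : a + (a + g) = g.
Proof. by rewrite addrA mx_addxx add0r. Qed.

Section Dist.
Variables (mx mz n : nat) (HX : 'M['F_2]_(mx, n)) (HZ : 'M['F_2]_(mz, n)).

Lemma lowerA (a g : 'rV['F_2]_n) :
  inker HZ a -> inker HX g -> ~~ (inrs HX a && inrs HZ g) ->
  (dprime HX HZ <= wt a + wt (a + g)%R)%N.
Proof.
move=> Ha Hg; rewrite /dprime; case Hra: (inrs HX a) => /= Hrg.
  apply: leq_trans (geq_minl _ _) _; rewrite /css_dZ.
  apply: leq_trans (minover_le _ _ (x := g) _) _; first by rewrite Hg Hrg.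
  have := wt_add a (a + g); rewrite addKF2; lia.
apply: leq_trans (geq_minr _ _) _.
apply: leq_trans (minover_le _ _ (x := a) _) _; first by rewrite Ha Hra.
apply: leq_trans (minover_le _ _ (x := g) _) _; first by [].
by rewrite f_eq.
Qed.

Lemma upperB : (0 < css_k HX HZ)%N -> exists a g : 'rV['F_2]_n,
  [/\ inker HZ a, inker HX g, ~~ (inrs HX a && inrs HZ g)
    & (wt a + wt (a + g)%R <= dprime HX HZ)%N].
Proof.
rewrite /css_k => Hk.
have [g0 Hg0] := exists_logical Hk.
have [g1 [Hg1 EdZ]] := minover_ex (P := fun v => inker HX v && ~~ inrs HZ v) (f := @wt n) (top := n) Hg0 (fun x _ => wt_le x).
have Hk' : (0 < n - \rank HZ - \rank HX)%N by rewrite subnAC.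
have [l0 Hl0] := exists_logical Hk'.
set inner := (fun l : 'rV['F_2]_n => minover (fun g : 'rV['F_2]_n => inker HX g)
                   (fun g => 2 * wt l + wt g - 2 * wt (vand l g))%N (2 * n)%N).
have [l [Hl EM]] := minover_ex (P := fun l => inker HZ l && ~~ inrs HX l) (f := inner) (top := (2 * n)%N) Hl0 (fun x _ => ltac:(apply: minover_top)).
have Hb : forall x : 'rV['F_2]_n, inker HX x -> (2 * wt l + wt x - 2 * wt (vand l x) <= 2 * n)%N.
  by move=> x _; rewrite f_eq mul2n -addnn leq_add // wt_le.
have [g [Hg Ei]] := minover_ex (P := fun g => inker HX g) (f := fun g => (2 * wt l + wt g - 2 * wt (vand l g))%N)
   (top := (2 * n)%N) (inker0 HX) Hb.
have -> : dprime HX HZ = minn (css_dZ HX HZ)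
   (minover (fun l => inker HZ l && ~~ inrs HX l) inner (2 * n)) by [].
case: (leqP (css_dZ HX HZ) (minover (fun l => inker HZ l && ~~ inrs HX l) inner (2 * n))) => Hle.
  exists 0, g1; rewrite inker0 wt0 add0r.
  case/andP: Hg1 => -> Hr; split => //; first by rewrite (negbTE Hr) andbF.
  by rewrite /css_dZ EdZ.
exists l, g; case/andP: Hl => -> Hl.
by rewrite Hg (negbTE Hl) EM /inner Ei f_eq.
Qed.
End Dist.

Unset Implicit Arguments.

Theorem mainTheorem17 (n mx mz : nat)
  (HX : 'M['F_2]_(mx, n)) (HZ : 'M['F_2]_(mz, n)) :
  HX *m HZ^T = 0 ->
  (0 < css_k HX HZ)%N ->
  [/\ newHX HX HZ *m (newHZ HX HZ)^T = 0,
      css_k (newHX HX HZ) (newHZ HX HZ) = (2 * css_k HX HZ)%N,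
      css_dX (newHX HX HZ) (newHZ HX HZ) = dprime HX HZ
    & css_dZ (newHX HX HZ) (newHZ HX HZ) = dprime HX HZ].
Proof.
move=> Horth Hk.
have Dtop : (dprime HX HZ <= n + n)%N.
  apply: leq_trans (geq_minl _ _) _; rewrite /css_dZ.
  exact: leq_trans (minover_top _ _ _) (leq_addr n n).
have [a [g [Ha Hg Hn Hw]]] := upperB Hk.
split.
- exact: orth.
- by rewrite /css_k rankX rankZ; lia.
- rewrite /css_dX; apply/eqP; rewrite eqn_leq; apply/andP; split.
    apply: leq_trans (minover_le _ _ (x := row_mx a (a + g)) _) _.
      by rewrite /= kerZ_row rsX_row !addKF2 Ha Hg.
    by rewrite wt_row.
  apply: minover_ge => // v; rewrite -[v]hsubmxK kerZ_row rsX_row wt_row.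
  case/andP=> /andP [H1 H2] H3; have := lowerA H1 H2 H3; by rewrite addKF2.
- rewrite /css_dZ; apply/eqP; rewrite eqn_leq; apply/andP; split.
    apply: leq_trans (minover_le _ _ (x := row_mx (a + g) a) _) _.
      by rewrite /= kerX_row rsZ_row [(a + g) + a]addrC !addKF2 Ha Hg andbT.
    by rewrite wt_row addnC.
  apply: minover_ge => // v; rewrite -[v]hsubmxK kerX_row rsZ_row wt_row.
  case/andP=> /andP [H1 H2] H3.
  have := lowerA H2 H1 H3; rewrite [lsubmx v + _]addrC addKF2 addnC; by [].
Qed.
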